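(* Let $k\ge3$ be odd and let $G$ be a connected $k$-uniform hypergraph (with at least one edge). Then $0$ is not an eigenvalue of the signless Laplacian tensor $\mathcal D+\mathcal A$ of $G$.
   Context: A $k$-uniform hypergraph $G=(V,E)$ has vertex set $V=[n]$ ($n\ge k$) and edge set $E$ of $k$-element subsets; $d_i$ is the number of edges containing $i$. $G$ is connected if any two distinct vertices are joined by a sequence of edges with consecutive edges intersecting. The adjacency tensor $\mathcal A$ has $a_{i_1\dots i_k}=\frac1{(k-1)!}$ if $\{i_1,\dots,i_k\}\in E$, else $0$; $\mathcal D$ is diagonal with $d_{i\dots i}=d_i$. $\lambda\in\mathbb C$ is an eigenvalue of a tensor $\mathcal T$ if there is $\mathbf x\in\mathbb C^n\setminus\{0\}$ with $\sum_{i_2,\dots,i_k}t_{ii_2\dots i_k}x_{i_2}\cdots x_{i_k}=\lambda x_i^{k-1}$ for all $i\in[n]$. *)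

(* Defs.v *)
(* Complex numbers modelled by an arbitrary numClosedFieldType
   (algebraically closed field of char 0 with norm/conjugation, e.g. algC). *)
From HB Require Import structures.
From mathcomp Require Import all_boot all_order all_algebra.
Set Implicit Arguments. Unset Strict Implicit. Unset Printing Implicit Defensive.
Import Order.TTheory GRing.Theory Num.Theory.
Local Open Scope ring_scope.

Definition k_uniform (n k : nat) (E : {set {set 'I_n}}) : Prop :=
  forall e, e \in E -> #|e| = k.

Definition hconnected (n : nat) (E : {set {set 'I_n}}) : Prop :=
  forall u v : 'I_n, u != v ->
    exists (e0 : {set 'I_n}) (es : seq {set 'I_n}),
      [/\ e0 \in E, all (fun e => e \in E) es, u \in e0, v \in last e0 es
        & path (fun e f => e :&: f != set0) e0 es].

Definition hdeg (n : nat) (E : {set {set 'I_n}}) (i : 'I_n) : nat :=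
  #|[set e in E | i \in e]|.

(* An order-k tensor of dimension n is represented as a function of the first
   index i and the remaining k-1 indices (i_2,...,i_k) given as a finite function
   t : 'I_(k-1) -> 'I_n. *)
Definition tensor (C : Type) (n k : nat) := 'I_n -> {ffun 'I_k.-1 -> 'I_n} -> C.

Definition adj_tensor (C : fieldType) (n k : nat) (E : {set {set 'I_n}})
  : tensor C n k :=
  fun i t => if (i |: [set t j | j : 'I_k.-1]) \in E then ((k.-1)`!%:R)^-1 else 0.

Definition deg_tensor (C : fieldType) (n k : nat) (E : {set {set 'I_n}})
  : tensor C n k :=
  fun i t => if t == [ffun => i] then (hdeg E i)%:R else 0.

Definition signless_laplacian (C : fieldType) (n k : nat) (E : {set {set 'I_n}})
  : tensor C n k :=
  fun i t => @deg_tensor C n k E i t + @adj_tensor C n k E i t.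

Definition tensor_apply (C : fieldType) (n k : nat) (T : tensor C n k)
  (x : 'I_n -> C) (i : 'I_n) : C :=
  \sum_(t : {ffun 'I_k.-1 -> 'I_n}) T i t * \prod_(j < k.-1) x (t j).

Definition tensor_eigenvalue (C : fieldType) (n k : nat) (T : tensor C n k)
  (lam : C) : Prop :=
  exists x : 'I_n -> C, (exists i, x i != 0) /\
    forall i, tensor_apply T x i = lam * x i ^+ k.-1.

(* Main.v *)
Require Import Defs.
From HB Require Import structures.
From mathcomp Require Import all_boot all_order all_algebra.
Import Order.TTheory GRing.Theory Num.Theory.
Set Implicit Arguments. Unset Strict Implicit.
Local Open Scope ring_scope.

Lemma fiber_eq (n K : nat) (E : {set {set 'I_n}}) (hu : k_uniform K.+1 E)
  (i : 'I_n) (e : {set 'I_n}) (he : e \in E) (ie : i \in e)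
  (t : {ffun 'I_K -> 'I_n}) :
  (i |: [set t j | j : 'I_K] == e) =
  (t \in [set f : {ffun 'I_K -> 'I_n} in ffun_on (mem (e :\ i)) | injectiveb f]).
Proof.
have ce := hu e he.
have cei : #|e :\ i| = K by rewrite (cardsD1 i e) ie in ce; case: ce.
set im := [set t j | j : 'I_K].
rewrite inE; apply/eqP/andP.
- move=> he'.
  have le1 : (#|im| <= K)%N.
    by apply: leq_trans (leq_imset_card _ _) _; rewrite card_ord.
  have := cardsU1 i im; rewrite he' ce.
  case: (boolP (i \in _)) => /= Hi Hc.
    by move: le1; rewrite add0n in Hc; rewrite -Hc ltnn.
  have eqc : #|im| = K by case: Hc.
  split.
  + apply/ffun_onP => j; rewrite !inE; apply/andP; split.
      by apply: contra Hi => /eqP <-; apply: imset_f.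
    by rewrite -he'; apply/setU1P; right; apply: imset_f.
  + apply/injectiveP => j1 j2 Hj.
    have /imset_injP Hinj : #|im| == #|predT : {pred 'I_K}|.
      by rewrite card_ord eqc.
    by apply: Hinj; rewrite ?inE.
- case=> /ffun_onP Hon /injectiveP Hinj.
  have Hsub : im \subset e :\ i.
    by apply/subsetP => v /imsetP [j _ ->]; apply: Hon.
  have Heq : im = e :\ i.
    apply/eqP; rewrite eqEcard Hsub cei.
    have := @card_imset _ _ t (predT : {pred 'I_K}) Hinj.
    by move=> H; rewrite /= /im H card_ord.
  by rewrite Heq setD1K.
Qed.

Definition Sset n K (E : {set {set 'I_n}}) (i : 'I_n) :=
  [set t : {ffun 'I_K -> 'I_n} | (i |: [set t j | j : 'I_K]) \in E].

Lemma card_Sset (n K : nat) (E : {set {set 'I_n}}) (hu : k_uniform K.+1 E) (i : 'I_n) :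
  #|Sset K E i| = (hdeg E i * K`!)%N.
Proof.
rewrite -sum1_card.
rewrite (partition_big (fun t : {ffun 'I_K -> 'I_n} => i |: [set t j | j : 'I_K])
          (fun e => (e \in E) && (i \in e))); last first.
  by move=> t; rewrite inE => ->; rewrite setU11.
rewrite /hdeg -sum1_card big_distrl /=.
apply: eq_big => [e|e /andP [he ie]]; first by rewrite inE.
rewrite mul1n.
have -> : K`! = #|[set f : {ffun 'I_K -> 'I_n} in ffun_on (mem (e :\ i)) | injectiveb f]|.
  rewrite card_inj_ffuns_on card_ord.
  have ce := hu e he.
  have -> : #|mem (e :\ i)| = K by rewrite (cardsD1 i e) ie in ce; case: ce.
  by rewrite ffactnn.
rewrite -sum1_card; apply: eq_bigl => t.
by rewrite -(fiber_eq hu he ie) inE; case: eqP => [->|]; rewrite ?he ?andbF.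
Qed.

Lemma apply_SL (C : numClosedFieldType) (n K : nat) (E : {set {set 'I_n}})
  (x : 'I_n -> C) (i : 'I_n) :
  tensor_apply (@signless_laplacian C n K.+1 E) x i =
  (hdeg E i)%:R * x i ^+ K +
  (K`!%:R)^-1 * \sum_(t in Sset K E i) \prod_(j < K) x (t j).
Proof.
rewrite /tensor_apply /signless_laplacian.
under eq_bigr do rewrite mulrDl.
rewrite big_split /=; congr (_ + _).
  rewrite (bigD1 [ffun=> i]) //= /deg_tensor eqxx.
  rewrite [X in _ + X]big1 ?addr0; last by move=> t /negPf Ht; rewrite Ht mul0r.
  congr (_ * _).
  under eq_bigr do rewrite ffunE.
  by rewrite prodr_const card_ord.
rewrite mulr_sumr [RHS]big_mkcond /=; apply: eq_bigr => t _.
rewrite /adj_tensor /Sset inE /=; case: ifP => _; by rewrite ?mul0r ?mulr0.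
Qed.

Lemma key (C : numClosedFieldType) (n K : nat) (E : {set {set 'I_n}})
  (hu : k_uniform K.+1 E) (x : 'I_n -> C) (i : 'I_n) (M : C)
  (hM : forall j, `|x j| <= M) (hi : `|x i| = M) (M0 : 0 < M)
  (heq : tensor_apply (@signless_laplacian C n K.+1 E) x i = 0) :
  forall t, t \in Sset K E i -> \prod_(j < K) x (t j) = - x i ^+ K.
Proof.
rewrite apply_SL in heq.
set S := Sset K E i in heq *.
set w := x i ^+ K in heq *.
have nw : `|w| = M ^+ K by rewrite normrX hi.
have w0 : w != 0 by rewrite -normr_eq0 nw expf_neq0 // gt_eqF.
have c0 : (K`!%:R : C) != 0 by rewrite pnatr_eq0 -lt0n fact_gt0.
have hd : (hdeg E i)%:R = (K`!%:R)^-1 * (#|S|%:R : C).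
  by rewrite /S card_Sset // natrM mulrCA mulVf // mulr1.
move/eqP: heq; rewrite hd -mulrA -mulrDr mulf_eq0 invr_eq0 (negPf c0) /= => /eqP heq.
have hs : \sum_(t in S) (- \prod_(j < K) x (t j) / w) = \sum_(t in S) (1 : C).
  rewrite -mulr_suml sumrN sumr_const.
  move/eqP: heq; rewrite addr_eq0 => /eqP Hq.
  by rewrite -Hq mulfK.
have hb : forall t, t \in S -> `|- \prod_(j < K) x (t j) / w| <= 1.
  move=> t _; rewrite normrM normrN normrV ?unitfE // nw normr_prod.
  rewrite ler_pdivrMr ?exprn_gt0 // mul1r.
  have -> : M ^+ K = \prod_(j < K) M by rewrite prodr_const card_ord.
  by apply: ler_prod => j _; rewrite normr_ge0 hM.
move=> t tS.
have := normC_sum_upper hb hs tS.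
move/(canRL (divfK w0)); rewrite mul1r => h.
by rewrite -h opprK.
Qed.

Lemma exists_max (C : numDomainType) (I : finType) (f : I -> C) (i1 : I)
  (hr : forall i, f i \is Num.real) : exists i0, forall j, f j <= f i0.
Proof.
suff [i0 H] : exists i0, forall j, j \in enum I -> f j <= f i0.
  by exists i0 => j; apply: H; rewrite mem_enum.
elim: (enum I) => [|a s [i0 IH]]; first by exists i1.
case/orP: (real_leVge (hr a) (hr i0)) => H.
  exists i0 => j; rewrite inE => /orP [/eqP -> //|]; exact: IH.
exists a => j; rewrite inE => /orP [/eqP -> //|js].
exact: le_trans (IH j js) H.
Qed.

Lemma propagate (n : nat) (E : {set {set 'I_n}}) (P : pred 'I_n)
  (hcl : forall e, e \in E -> forall u v, u \in e -> v \in e -> P u -> P v)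
  (hc : hconnected E) u v : P u -> P v.
Proof.
case: (eqVneq u v) => [-> //|neq].
case: (hc u v neq) => e0 [es [he0 hes ue0 vlast hpath]].
elim: es e0 u he0 hes ue0 vlast hpath {neq} => [|f es IH] e0 u he0 /= hes ue0 vlast hpath.
  exact: hcl he0 u v ue0 vlast.
move: hes hpath => /andP [hf hes] /andP [hi hpath] Pu.
case/set0Pn: hi => w; rewrite inE => /andP [we0 wf].
exact: (IH f w hf hes wf vlast hpath (hcl e0 he0 u w ue0 we0 Pu)).
Qed.

Lemma exists_enum (n K : nat) (E : {set {set 'I_n}}) (hu : k_uniform K.+1 E)
  (e : {set 'I_n}) (he : e \in E) (u : 'I_n) (ue : u \in e) :
  exists t : {ffun 'I_K -> 'I_n},
    [/\ u |: [set t j | j : 'I_K] = e, u \notin [set t j | j : 'I_K] & injective t].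
Proof.
have : (0 < #|[set f : {ffun 'I_K -> 'I_n} in ffun_on (mem (e :\ u)) | injectiveb f]|)%N.
  rewrite card_inj_ffuns_on card_ord.
  have ce := hu e he.
  have -> : #|mem (e :\ u)| = K by rewrite (cardsD1 u e) ue in ce; case: ce.
  by rewrite ffactnn fact_gt0.
case/card_gt0P => t tB.
have tB' := tB.
rewrite -(fiber_eq hu he ue) in tB'.
move: tB; rewrite inE => /andP [/ffun_onP Hon /injectiveP Hinj].
exists t; split => //; first exact/eqP.
apply/imsetP => [[j _ Hj]].
by have := Hon j; rewrite -Hj !inE eqxx.
Qed.

Unset Implicit Arguments.

Theorem proposition4p1 (C : numClosedFieldType) (n k : nat)
  (E : {set {set 'I_n}}) :
  odd k -> (3 <= k)%N -> (k <= n)%N ->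
  k_uniform k E -> E != set0 -> hconnected E ->
  ~ tensor_eigenvalue (@signless_laplacian C n k E) 0.
Proof.
move=> ko k3 kn hu hE hc.
case: k ko k3 kn hu => [//|K] ko k3 kn hu.
move=> [x [[i1 xi1] heig]].
have h0 i : tensor_apply (@signless_laplacian C n K.+1 E) x i = 0.
  by rewrite heig mul0r.
have [i0 hmax] := @exists_max C _ (fun i => `|x i|) i1 (fun i => normr_real (x i)).
set M := `|x i0| in hmax.
have M0 : 0 < M by apply: lt_le_trans (hmax i1); rewrite normr_gt0.
have allM : forall v, `|x v| = M.
  move=> v; apply/eqP; apply: (@propagate n E (fun v => `|x v| == M) _ hc i0) => //.
  move=> e he u w ue we /eqP Mu.
  case: (eqVneq u w) => [<- //|neq]; first by rewrite Mu.
  have [t [ht nu tinj]] := exists_enum hu he ue.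
  have tS : t \in Sset K E u by rewrite /Sset inE ht.
  have hp := key hu hmax Mu M0 (h0 u) tS.
  have : w \in [set t j | j : 'I_K].
    by move: we; rewrite -ht => /setU1P [Hw|//]; move: neq; rewrite Hw eqxx.
  case/imsetP => j0 _ Hw.
  have := congr1 (fun z => `|z|) hp; rewrite /= normrN normrX Mu normr_prod.
  rewrite (bigD1 j0) //= -Hw => Heq.
  set P := \prod_(j < K | j != j0) M.
  have P0 : 0 < P by apply: prodr_gt0.
  have Hle : \prod_(j < K | j != j0) `|x (t j)| <= P by apply: ler_prod => j _; rewrite normr_ge0 hmax.
  have MK : M ^+ K = M * P.
    have <- : \prod_(j < K) M = M ^+ K by rewrite prodr_const card_ord.
    by rewrite (bigD1 j0).
  rewrite eq_le hmax /=.
  rewrite -(ler_pM2r P0) -MK -Heq.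
  by apply: ler_wpM2l => //; apply: normr_ge0.
have hmax' : forall j, `|x j| <= M by move=> j; rewrite allM.
have L : forall e, e \in E -> forall u, u \in e -> x u ^+ K.+1 = - \prod_(v in e) x v.
  move=> e he u ue.
  have [t [ht nu tinj]] := exists_enum hu he ue.
  have tS : t \in Sset K E u by rewrite /Sset inE ht.
  have hp := key hu hmax' (allM u) M0 (h0 u) tS.
  rewrite -ht big_setU1 //= big_imset /=; last by move=> a b _ _; apply: tinj.
  rewrite exprS.
  rewrite -[X in - (_ * X)]/(\prod_(j < K) x (t j)) hp mulrN opprK.
  done.
set c := x i0 ^+ K.+1.
have allc : forall v, x v ^+ K.+1 = c.
  move=> v; apply/eqP; apply: (@propagate n E (fun v => x v ^+ K.+1 == c) _ hc i0) => //.
  by move=> e he u w ue we /eqP Hu; rewrite (L e he w we) -(L e he u ue) Hu.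
case/set0Pn: hE => e he.
have : (0 < #|e|)%N by rewrite (hu e he).
case/card_gt0P => u ue.
have Hp := L e he u ue; rewrite allc in Hp.
have : (\prod_(v in e) x v) ^+ K.+1 = c ^+ K.+1.
  by rewrite -prodrXl; under eq_bigr do rewrite allc; rewrite prodr_const (hu e he).
rewrite -(opprK (\prod_(v in e) x v)) -Hp exprNn -signr_odd ko expr1 mulN1r => H.
have : c ^+ K.+1 *+ 2 == 0 by rewrite mulr2n -{1}H addNr.
rewrite mulrn_eq0 /= expf_eq0 /= /c expf_eq0 /= => /eqP hx.
by move: M0; rewrite /M hx normr0 ltxx.
Qed.
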